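(* Let $\kappa$ be an infinite cardinal and let $\langle\kappa\times\kappa^{++},\unlhd\rangle$ be a $(\kappa,\kappa^{++})$-admissible poset. For $(\alpha,\beta)\in\kappa\times\kappa^{++}$ put $C(\alpha,\beta)=\{(\gamma,\delta)\in\kappa\times\kappa^{++}:(\gamma,\delta)\unlhd(\alpha,\beta)\}$, and give $X=\kappa\times\kappa^{++}$ the topology generated by the subbase consisting of all sets $C(\alpha,\beta)$ and their complements $X\setminus C(\alpha,\beta)$. Then $X$ is Hausdorff, every $C(\alpha,\beta)$ is compact (so $X$ is a locally compact Hausdorff space), and $I_\beta(X)=\kappa\times\{\beta\}$ for every $\beta<\kappa^{++}$. In particular $X$ is a locally compact Hausdorff scattered space of height $\kappa^{++}$ whose cardinal sequence is constantly $\kappa$.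
   Context: $(\kappa,\kappa^{++})$-admissible: $\unlhd$ is a reflexive, transitive, antisymmetric relation on $\kappa\times\kappa^{++}$ such that (A) $(\alpha,\beta)\unlhd(\alpha',\beta')$ with $(\alpha,\beta)\neq(\alpha',\beta')$ implies $\beta<\beta'$; (B) for every $\beta<\kappa^{++}$ and $(\alpha',\beta')$ with $\beta<\beta'$ there are infinitely many $\alpha$ with $(\alpha,\beta)\unlhd(\alpha',\beta')$; (C) for any two points $x_0,x_1$ there is a finite set $b$ of points each $\unlhd$-below both $x_0,x_1$ such that every point $\unlhd$-below both $x_0,x_1$ is $\unlhd$-below some element of $b$. Cantor–Bendixson levels: $I_0(X)$ is the set of isolated points of $X$, and $I_\beta(X)$ is the set of isolated points of the subspace $X\setminus\bigcup_{\alpha<\beta}I_\alpha(X)$. $X$ is scattered if $X=\bigcup_{\beta<\lambda}I_\beta(X)$ where $\lambda$ is the least ordinal with $I_\lambda(X)=\emptyset$ (the height); the cardinal sequence is $\langle|I_\beta(X)|:\beta<\lambda\rangle$. *)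

(* Defs.v *)
(* sets are predicates, cardinalities are compared via injections. *)
From Stdlib Require Import List Classical.
Import ListNotations.
Set Implicit Arguments.

Definition inj_le (A B : Type) : Prop :=
  exists f : A -> B, forall x y, f x = f y -> x = y.

Definition same_card (A B : Type) : Prop :=
  exists (f : A -> B) (g : B -> A),
    (forall a, g (f a) = a) /\ (forall b, f (g b) = b).

(** |B| is the successor cardinal of |A|: |A| < |B| and every subset of B has
    cardinality <= |A| or = |B|. *)
Definition succ_card (A B : Type) : Prop :=
  inj_le A B /\ ~ inj_le B A /\
  forall P : B -> Prop, inj_le {x : B | P x} A \/ inj_le B {x : B | P x}.

Definition infinite_type (A : Type) : Prop := inj_le nat A.

Definition strict_well_order (L : Type) (lt : L -> L -> Prop) : Prop :=
  well_founded lt /\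
  (forall x y z, lt x y -> lt y z -> lt x z) /\
  (forall x y, lt x y \/ x = y \/ lt y x).

(** (L, lt) is (order-isomorphic to) the ordinal kappa^{++}, kappa = |K|:
    an initial ordinal (every proper initial segment is of smaller cardinality)
    whose cardinality is the second successor of |K|. *)
Definition is_kappa_pp (K L : Type) (lt : L -> L -> Prop) : Prop :=
  strict_well_order lt /\
  (forall x : L, ~ inj_le L {y : L | lt y x}) /\
  exists M : Type, succ_card K M /\ succ_card M L.

Definition admissible (K L : Type) (lt : L -> L -> Prop)
  (R : (K * L) -> (K * L) -> Prop) : Prop :=
  (forall x, R x x) /\
  (forall x y z, R x y -> R y z -> R x z) /\
  (forall x y, R x y -> R y x -> x = y) /\
  (forall x y, R x y -> x <> y -> lt (snd x) (snd y)) /\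
  (* (B) *)
  (forall (b : L) (a' : K) (b' : L), lt b b' ->
     forall l : list K, exists a : K, ~ In a l /\ R (a, b) (a', b')) /\
  (* (C) *)
  (forall x0 x1, exists bs : list (K * L),
     (forall y, In y bs -> R y x0 /\ R y x1) /\
     (forall z, R z x0 -> R z x1 -> exists y, In y bs /\ R z y)).

Definition gen_open (T : Type) (S : (T -> Prop) -> Prop) (U : T -> Prop) : Prop :=
  forall x, U x -> exists l : list (T -> Prop),
    (forall V, In V l -> S V) /\ (forall V, In V l -> V x) /\
    (forall y, (forall V, In V l -> V y) -> U y).

Definition hausdorff (T : Type) (opn : (T -> Prop) -> Prop) : Prop :=
  forall x y : T, x <> y -> exists U V,
    opn U /\ opn V /\ U x /\ V y /\ (forall z, ~ (U z /\ V z)).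

Definition compact (T : Type) (opn : (T -> Prop) -> Prop) (A : T -> Prop) : Prop :=
  forall Cov : (T -> Prop) -> Prop,
    (forall U, Cov U -> opn U) ->
    (forall x, A x -> exists U, Cov U /\ U x) ->
    exists l : list (T -> Prop),
      (forall U, In U l -> Cov U) /\ (forall x, A x -> exists U, In U l /\ U x).

Definition locally_compact (T : Type) (opn : (T -> Prop) -> Prop) : Prop :=
  forall x : T, exists U C, opn U /\ U x /\ (forall y, U y -> C y) /\ compact opn C.

Definition isolated_in (T : Type) (opn : (T -> Prop) -> Prop) (Y : T -> Prop) (x : T) : Prop :=
  Y x /\ exists U, opn U /\ U x /\ (forall y, U y -> Y y -> y = x).

Definition CB_levels (T L : Type) (opn : (T -> Prop) -> Prop) (lt : L -> L -> Prop)
  (I : L -> T -> Prop) : Prop :=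
  forall b x, I b x <-> isolated_in opn (fun y => ~ exists a, lt a b /\ I a y) x.

Definition Cdown (K L : Type) (R : (K * L) -> (K * L) -> Prop) (a : K) (b : L) : (K * L) -> Prop :=
  fun p => R p (a, b).

Definition adm_subbase (K L : Type) (R : (K * L) -> (K * L) -> Prop) (V : (K * L) -> Prop) : Prop :=
  exists a b, V = Cdown R a b \/ V = (fun p => ~ Cdown R a b p).

(* Main.v *)
Require Import Defs.
From Stdlib Require Import List Classical ProofIrrelevance.
Import ListNotations.

Lemma wf_irrefl (L:Type) (lt : L->L->Prop) : well_founded lt -> forall x, ~ lt x x.
Proof. intros Hwf x. induction (Hwf x) as [x _ IH]. intro H. exact (IH x H H). Qed.

Lemma max_list (L:Type) (lt:L->L->Prop)
  (Htr : forall x y z, lt x y -> lt y z -> lt x z)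
  (Htri : forall x y, lt x y \/ x = y \/ lt y x) (b : L) (ms : list L) :
  exists m, (m = b \/ In m ms) /\ (forall l, In l ms -> l = m \/ lt l m) /\ (m = b \/ lt b m).
Proof.
  induction ms as [|l0 ms IH].
  - exists b. simpl. split; [tauto|]. split; [tauto|]. tauto.
  - destruct IH as [m [H1 [H2 H3]]].
    destruct (Htri l0 m) as [H|[H|H]].
    + exists m. split; [simpl; tauto|]. split; [|exact H3].
      intros l [<-|Hl]; [right; exact H | exact (H2 l Hl)].
    + exists m. split; [simpl; tauto|]. split; [|exact H3].
      intros l [<-|Hl]; [left; exact H | exact (H2 l Hl)].
    + exists l0. split; [simpl; tauto|]. split.
      * intros l [<-|Hl]; [left; reflexivity|].
        destruct (H2 l Hl) as [->|H']; [right; exact H| right; eapply Htr; eauto].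
      * right. destruct H3 as [->|H3]; [exact H| eapply Htr; eauto].
Qed.

Lemma clist {K L:Type} {R : K*L -> K*L -> Prop}
  (HC : forall x0 x1, exists bs : list (K * L),
     (forall y, In y bs -> R y x0 /\ R y x1) /\
     (forall z, R z x0 -> R z x1 -> exists y, In y bs /\ R z y))
  (z : K*L) (D : list (K*L)) :
  (forall d, In d D -> ~ R z d) ->
  exists D', (forall y, In y D' -> R y z /\ y <> z) /\
    (forall w, R w z -> forall d, In d D -> R w d -> exists y, In y D' /\ R w y).
Proof.
  induction D as [|d0 D IH]; intros Hn.
  - exists nil. split; [intros y []|]. intros w _ d [].
  - destruct (IH ltac:(intros d Hd; apply Hn; right; exact Hd)) as [D' [H1 H2]].
    destruct (HC z d0) as [bs [Hb1 Hb2]].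
    exists (bs ++ D'). split.
    + intros y Hy. apply in_app_or in Hy. destruct Hy as [Hy|Hy]; [|exact (H1 y Hy)].
      destruct (Hb1 y Hy) as [Hyz Hyd]. split; [exact Hyz|]. intros ->.
      apply (Hn d0); [left; reflexivity| exact Hyd].
    + intros w Hw d [<-|Hd] Hwd.
      * destruct (Hb2 w Hw Hwd) as [y [Hy Hwy]]. exists y.
        split; [apply in_or_app; left; exact Hy| exact Hwy].
      * destruct (H2 w Hw d Hd Hwd) as [y [Hy Hwy]]. exists y.
        split; [apply in_or_app; right; exact Hy| exact Hwy].
Qed.

Lemma nbhd_D {K L:Type} {R : K*L -> K*L -> Prop}
  (Htr : forall x y z, R x y -> R y z -> R x z)
  (HC : forall x0 x1, exists bs : list (K * L),
     (forall y, In y bs -> R y x0 /\ R y x1) /\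
     (forall z, R z x0 -> R z x1 -> exists y, In y bs /\ R z y))
  (x : K*L) (l : list (K*L -> Prop)) :
  (forall V, In V l -> adm_subbase R V) -> (forall V, In V l -> V x) ->
  exists D, (forall d, In d D -> R d x /\ d <> x) /\
    (forall w, R w x -> (forall d, In d D -> ~ R w d) -> forall V, In V l -> V w).
Proof.
  induction l as [|V l IH]; intros HS Hx.
  - exists nil. split; [intros d []|]. intros w _ _ V [].
  - destruct (IH ltac:(intros; apply HS; right; auto) ltac:(intros; apply Hx; right; auto))
      as [D [H1 H2]].
    destruct (HS V (or_introl eq_refl)) as [a0 [b0 [HV|HV]]]; subst V.
    + exists D. split; [exact H1|]. intros w Hw Hn V [<-|HVl].
      * unfold Cdown. eapply Htr; [exact Hw|]. exact (Hx _ (or_introl eq_refl)).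
      * exact (H2 w Hw Hn V HVl).
    + assert (Hnx : ~ R x (a0,b0)) by exact (Hx _ (or_introl eq_refl)).
      destruct (HC x (a0,b0)) as [bs [Hb1 Hb2]].
      exists (bs ++ D). split.
      * intros d Hd. apply in_app_or in Hd. destruct Hd as [Hd|Hd]; [|exact (H1 d Hd)].
        destruct (Hb1 d Hd) as [Hdx Hda]. split; [exact Hdx|]. intros ->. exact (Hnx Hda).
      * intros w Hw Hn V [<-|HVl].
        -- unfold Cdown. intro Hwa. destruct (Hb2 w Hw Hwa) as [y [Hy Hwy]].
           exact (Hn y (in_or_app _ _ _ (or_introl Hy)) Hwy).
        -- apply (H2 w Hw); [|exact HVl]. intros d Hd. apply Hn. apply in_or_app; right; exact Hd.
Qed.

Lemma descend {K L:Type} {lt : L->L->Prop} {R : K*L -> K*L -> Prop}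
  (Hwo : strict_well_order lt) (Hadm : admissible lt R) :
  forall x b D, lt b (snd x) -> (forall d, In d D -> R d x /\ d <> x) ->
  exists y, snd y = b /\ R y x /\ (forall d, In d D -> ~ R y d).
Proof.
  destruct Hwo as [Hwf [Hltr Htri]].
  destruct Hadm as [Hrefl [Htr [Hant [HA [HB HC]]]]].
  pose proof (wf_irrefl _ _ Hwf) as Hirr.
  intros x. remember (snd x) as bx eqn:Ebx. revert x Ebx.
  induction bx as [bx IH] using (well_founded_ind Hwf).
  intros x Ebx b D Hb HD. subst bx.
  destruct (max_list _ _ Hltr Htri b (map snd D)) as [m [Hm1 [Hm2 Hm3]]].
  destruct Hm3 as [Hmb|Hbm].
  - subst m.
    destruct (HB b (fst x) (snd x) Hb (map fst D)) as [a [Ha Hax]].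
    rewrite <- surjective_pairing in Hax.
    exists (a,b). split; [reflexivity|]. split; [exact Hax|].
    intros d Hd Hr.
    destruct (classic ((a,b) = d)) as [Heq|Hne].
    + apply Ha. subst d. exact (in_map fst D _ Hd).
    + pose proof (HA _ _ Hr Hne) as H. simpl in H.
      destruct (Hm2 (snd d) (in_map snd D d Hd)) as [E|E].
      * rewrite E in H; exact (Hirr b H).
      * exact (Hirr b (Hltr _ _ _ H E)).
  - destruct Hm1 as [->|Hm1]; [exfalso; exact (Hirr b Hbm)|].
    apply in_map_iff in Hm1. destruct Hm1 as [d0 [Ed0 Hd0]].
    destruct (HD d0 Hd0) as [Hd0x Hd0ne].
    pose proof (HA _ _ Hd0x Hd0ne) as Hmx. rewrite Ed0 in Hmx.
    destruct (HB m (fst x) (snd x) Hmx (map fst D)) as [a [Ha Hax]].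
    rewrite <- surjective_pairing in Hax.
    assert (Hzn : forall d, In d D -> ~ R (a,m) d).
    { intros d Hd Hr. destruct (classic ((a,m) = d)) as [Heq|Hne].
      - apply Ha. subst d. exact (in_map fst D _ Hd).
      - pose proof (HA _ _ Hr Hne) as H. simpl in H.
        destruct (Hm2 (snd d) (in_map snd D d Hd)) as [E|E].
        + rewrite E in H; exact (Hirr m H).
        + exact (Hirr m (Hltr _ _ _ H E)). }
    destruct (clist HC (a,m) D Hzn) as [D' [H1 H2]].
    destruct (IH m Hmx (a,m) eq_refl b D' Hbm H1) as [y [Hy1 [Hy2 Hy3]]].
    exists y. split; [exact Hy1|]. split; [eapply Htr; eauto|].
    intros d Hd Hyd. destruct (H2 y Hy2 d Hd Hyd) as [y' [Hy' Hyy']]. exact (Hy3 y' Hy' Hyy').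
Qed.

Lemma dense_below {K L:Type} {lt : L->L->Prop} {R : K*L -> K*L -> Prop}
  (Hwo : strict_well_order lt) (Hadm : admissible lt R) :
  forall x b U, lt b (snd x) -> gen_open (adm_subbase R) U -> U x ->
  exists y, U y /\ snd y = b.
Proof.
  intros x b U Hb HU Hx.
  destruct (HU x Hx) as [l [Hl1 [Hl2 Hl3]]].
  pose proof Hadm as Hadm'. destruct Hadm' as [_ [Htr [_ [_ [_ HC]]]]].
  destruct (nbhd_D Htr HC x l Hl1 Hl2) as [D [HD1 HD2]].
  destruct (descend Hwo Hadm x b D Hb HD1) as [y [Hy1 [Hy2 Hy3]]].
  exists y. split; [|exact Hy1]. apply Hl3. exact (HD2 y Hy2 Hy3).
Qed.

Lemma open_inter {T} (S : (T->Prop)->Prop) (l : list (T->Prop)) :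
  (forall V, In V l -> S V) -> gen_open S (fun y => forall V, In V l -> V y).
Proof. intros HS x Hx. exists l. auto. Qed.

Lemma open_sb {T} (S : (T->Prop)->Prop) V : S V -> gen_open S V.
Proof.
  intros HS x Hx. exists [V].
  split; [intros V' [<-|[]]; exact HS|].
  split; [intros V' [<-|[]]; exact Hx|].
  intros y H. apply H. left; reflexivity.
Qed.

Lemma sb_pos {K L} (R : K*L -> K*L -> Prop) x : adm_subbase R (fun p => R p x).
Proof. exists (fst x), (snd x). left. destruct x. reflexivity. Qed.
Lemma sb_neg {K L} (R : K*L -> K*L -> Prop) x : adm_subbase R (fun p => ~ R p x).
Proof. exists (fst x), (snd x). right. destruct x. reflexivity. Qed.

Lemma cdown_compact {K L:Type} {lt : L->L->Prop} {R : K*L -> K*L -> Prop}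
  (Hwo : strict_well_order lt) (Hadm : admissible lt R) :
  forall Cov : (K*L -> Prop) -> Prop, (forall U, Cov U -> gen_open (adm_subbase R) U) ->
  forall x, (forall z, R z x -> exists U, Cov U /\ U z) ->
  exists ls, (forall U, In U ls -> Cov U) /\ (forall z, R z x -> exists U, In U ls /\ U z).
Proof.
  destruct Hwo as [Hwf _]. destruct Hadm as [Hrefl [Htr [Hant [HA [HB HC]]]]].
  intros Cov HCov x. remember (snd x) as bx eqn:Ebx. revert x Ebx.
  induction bx as [bx IH] using (well_founded_ind Hwf).
  intros x Ebx Hcov. subst bx.
  destruct (Hcov x (Hrefl x)) as [U [HU Ux]].
  destruct (HCov U HU x Ux) as [l [Hl1 [Hl2 Hl3]]].
  destruct (nbhd_D Htr HC x l Hl1 Hl2) as [D [HD1 HD2]].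
  assert (HDs : exists ls, (forall U, In U ls -> Cov U) /\
     (forall z, (exists d, In d D /\ R z d) -> exists U, In U ls /\ U z)).
  { clear HD2. induction D as [|d D IHD]; intros.
    - exists nil. split; [intros _ []|]. intros z [d [[] _]].
    - destruct (IHD ltac:(intros; apply HD1; right; auto)) as [ls [H1 H2]].
      destruct (HD1 d (or_introl eq_refl)) as [Hdx Hdne].
      destruct (IH (snd d) (HA _ _ Hdx Hdne) d eq_refl) as [ls' [H1' H2']].
      { intros z Hz. apply Hcov. eapply Htr; eauto. }
      exists (ls' ++ ls). split.
      + intros U' HU'. apply in_app_or in HU'. destruct HU'; auto.
      + intros z [d' [[<-|Hd'] Hzd]].
        * destruct (H2' z Hzd) as [U' [? ?]]. exists U'.
          split; [apply in_or_app; left; auto| auto].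
        * destruct (H2 z (ex_intro _ d' (conj Hd' Hzd))) as [U' [? ?]]. exists U'.
          split; [apply in_or_app; right; auto| auto]. }
  destruct HDs as [ls [H1 H2]].
  exists (U :: ls). split.
  - intros U' [<-|HU']; auto.
  - intros z Hz. destruct (classic (exists d, In d D /\ R z d)) as [Hd|Hnd].
    + destruct (H2 z Hd) as [U' [? ?]]. exists U'. split; [right; auto| auto].
    + exists U. split; [left; reflexivity|]. apply Hl3. apply (HD2 z Hz).
      intros d Hd Hzd. apply Hnd. exists d; auto.
Qed.

Lemma haus {K L:Type} {lt : L->L->Prop} {R : K*L -> K*L -> Prop}
  (Hadm : admissible lt R) : hausdorff (gen_open (adm_subbase R)).
Proof.
  destruct Hadm as [Hrefl [Htr [Hant [HA [HB HC]]]]].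
  intros x y Hxy.
  destruct (classic (R x y)) as [Hr|Hr].
  - exists (fun p => R p x), (fun p => ~ R p x).
    split; [apply open_sb, sb_pos|]. split; [apply open_sb, sb_neg|].
    split; [apply Hrefl|]. split.
    + intro Hyx. apply Hxy. apply Hant; assumption.
    + intros z [H1 H2]. exact (H2 H1).
  - destruct (classic (R y x)) as [Hr'|Hr'].
    + exists (fun p => ~ R p y), (fun p => R p y).
      split; [apply open_sb, sb_neg|]. split; [apply open_sb, sb_pos|].
      split; [exact Hr|]. split; [apply Hrefl|].
      intros z [H1 H2]. exact (H1 H2).
    + destruct (HC x y) as [bs [Hb1 Hb2]].
      exists (fun p => forall V, In V ((fun p => R p x) :: map (fun d => fun p => ~ R p d) bs) -> V p),
             (fun p => R p y).
      split.
      { apply open_inter. intros V [<-|HV]; [apply sb_pos|].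
        apply in_map_iff in HV. destruct HV as [d [<- _]]. apply sb_neg. }
      split; [apply open_sb, sb_pos|].
      split.
      { intros V [<-|HV]; [apply Hrefl|].
        apply in_map_iff in HV. destruct HV as [d [<- Hd]]. intro Hxd.
        destruct (Hb1 d Hd) as [Hdx Hdy].
        pose proof (Hant _ _ Hxd Hdx) as E. subst d. exact (Hr Hdy). }
      split; [apply Hrefl|].
      intros z [H1 H2].
      assert (Hzx : R z x) by (apply (H1 (fun p => R p x)); left; reflexivity).
      destruct (Hb2 z Hzx H2) as [d [Hd Hzd]].
      apply (H1 (fun p => ~ R p d)); [right; apply in_map_iff; exists d; auto| exact Hzd].
Qed.

Lemma I0_CB {K L:Type} {lt : L->L->Prop} {R : K*L -> K*L -> Prop}
  (Hwo : strict_well_order lt) (Hadm : admissible lt R) :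
  CB_levels (gen_open (adm_subbase R)) lt (fun b x => snd x = b).
Proof.
  pose proof Hwo as Hwo'. destruct Hwo' as [Hwf [Hltr Htri]].
  pose proof (wf_irrefl _ _ Hwf) as Hirr.
  pose proof Hadm as Hadm'. destruct Hadm' as [Hrefl [Htr [Hant [HA [HB HC]]]]].
  intros b x. split.
  - intros Hx. split.
    + intros [a [Hab Ha]]. rewrite Hx in Ha. subst a. exact (Hirr b Hab).
    + exists (fun p => R p x). split; [apply open_sb, sb_pos|]. split; [apply Hrefl|].
      intros y Hyx Hy. destruct (classic (y = x)) as [E|E]; auto. exfalso. apply Hy.
      exists (snd y). split; [rewrite <- Hx; exact (HA _ _ Hyx E) | reflexivity].
  - intros [Hx [U [HU [Ux HUy]]]].
    destruct (Htri (snd x) b) as [H|[H|H]].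
    + exfalso. apply Hx. exists (snd x). auto.
    + exact H.
    + exfalso. destruct (dense_below Hwo Hadm x b U H HU Ux) as [y [Uy Hyb]].
      assert (E : y = x).
      { apply HUy; [exact Uy|]. intros [a [Hab Ha]]. rewrite Hyb in Ha. subst a. exact (Hirr _ Hab). }
      subst y. rewrite Hyb in H. exact (Hirr _ H).
Qed.

Lemma iso_ext {T} (opn : (T->Prop)->Prop) (Y Y' : T -> Prop) x :
  (forall y, Y y <-> Y' y) -> isolated_in opn Y x -> isolated_in opn Y' x.
Proof.
  intros HY [Hx [U [HU [Ux HUy]]]]. split; [apply HY; exact Hx|].
  exists U. split; [exact HU|]. split; [exact Ux|]. intros y Uy Hy. apply HUy; [exact Uy|]. apply HY; exact Hy.
Qed.

Lemma CB_unique {K L:Type} {lt : L->L->Prop} {R : K*L -> K*L -> Prop}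
  (Hwo : strict_well_order lt) (Hadm : admissible lt R) (I : L -> K*L -> Prop) :
  CB_levels (gen_open (adm_subbase R)) lt I -> forall b x, I b x <-> snd x = b.
Proof.
  intros HI b. pose proof Hwo as Hwo'. destruct Hwo' as [Hwf _].
  induction b as [b IH] using (well_founded_ind Hwf). intros x.
  assert (HY : forall y, (~ exists a, lt a b /\ I a y) <-> (~ exists a, lt a b /\ snd y = a)).
  { intros y. split; intros Hn [a [Hab Ha]]; apply Hn; exists a; split; auto.
    - exact (proj2 (IH a Hab y) Ha).
    - exact (proj1 (IH a Hab y) Ha). }
  split; intro H.
  - apply (proj2 (I0_CB Hwo Hadm b x)). apply (iso_ext _ _ _ x HY). exact (proj1 (HI b x) H).
  - apply (proj2 (HI b x)). apply (iso_ext _ _ _ x (fun y => iff_sym (HY y))).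
    exact (proj1 (I0_CB Hwo Hadm b x) H).
Qed.

Theorem mainTheorem2 (K L : Type) (lt : L -> L -> Prop)
  (R : (K * L) -> (K * L) -> Prop) :
  infinite_type K ->
  is_kappa_pp K lt ->
  admissible lt R ->
  let opn := gen_open (adm_subbase R) in
  hausdorff opn /\
  (forall a b, compact opn (Cdown R a b)) /\
  locally_compact opn /\
  (exists I, CB_levels opn lt I) /\
  (forall I, CB_levels opn lt I ->
     (forall b x, I b x <-> snd x = b) /\
     (* scattered: X is the union of the levels indexed by kappa^{++} *)
     (forall x, exists b, I b x) /\
     (* height exactly kappa^{++}: every level below kappa^{++} is nonempty *)
     (forall b, exists x, I b x) /\
     (* cardinal sequence constantly kappa *)
     (forall b, same_card {x : K * L | I b x} K)).
Proof.
  intros Hinf Hk Hadm opn. unfold opn. clear opn.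
  destruct Hk as [Hwo _].
  pose proof Hadm as Hadm'. destruct Hadm' as [Hrefl _].
  split; [exact (haus Hadm)|].
  split.
  { intros a b Cov HCov Hcov. exact (cdown_compact Hwo Hadm Cov HCov (a,b) Hcov). }
  split.
  { intros x. exists (fun p => R p x), (fun p => R p x).
    split; [apply open_sb, sb_pos|]. split; [apply Hrefl|]. split; [auto|].
    intros Cov HCov Hcov. exact (cdown_compact Hwo Hadm Cov HCov x Hcov). }
  split; [exists (fun b x => snd x = b); exact (I0_CB Hwo Hadm)|].
  intros I HI. pose proof (CB_unique Hwo Hadm I HI) as Hu.
  split; [exact Hu|].
  split; [intros x; exists (snd x); apply Hu; reflexivity|].
  split.
  { intros b. destruct Hinf as [f _]. exists (f 0, b). apply Hu; reflexivity. }
  intros b.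
  exists (fun s => fst (proj1_sig s)),
         (fun k => exist (fun x => I b x) (k,b) (proj2 (Hu b (k,b)) eq_refl)).
  split.
  - intros [[k b'] Hs]. simpl.
    assert (E : b' = b) by exact (proj1 (Hu b (k,b')) Hs). subst b'.
    f_equal. apply proof_irrelevance.
  - intros k. reflexivity.
Qed.
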